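(* Let $q\ge3$ be a prime power and let $P\subseteq[0,q-2]^n$ be an integral convex polytope which contains, up to a unimodular affine transformation, either a lattice segment of length $2$ (the points $0,e_1,2e_1$ and the segment joining them) or the unit square $[0,1]^2\times\{0\}$. Set $P_0=P$ and $P_{k+1}=P_k*P_k$ for $k\ge0$, and let $\delta_k=\delta(P_k)$. Then $\delta_{k+1}=\min\{\delta_k,\ 2\delta_k-\delta_k^2\frac{q}{q-1}\}$ for all $k\ge0$, and $\delta_k=\delta_2$ for all $k\ge2$.
   Context: The join of $P\subseteq\mathbb{R}^n$ and $Q\subseteq\mathbb{R}^m$ is $P*Q=\mathrm{conv}\big(\{(p,\mathbf{0}^m,0):p\in P\}\cup\{(\mathbf{0}^n,y,1):y\in Q\}\big)\subseteq\mathbb{R}^{n+m+1}$; thus $P_k\subseteq[0,q-2]^{n_k}$ with $n_0=n$, $n_{k+1}=2n_k+1$. For an integral convex polytope $P\subseteq[0,q-2]^n$: $\mathcal{L}_P=\mathrm{span}_{\mathbb{F}_q}\{x^p: p\in P\cap\mathbb{Z}^n\}$, $N(P)=\max_{0\neq f\in\mathcal{L}_P}|Z(f)|$ with $Z(f)$ the zero set of $f$ in $(\mathbb{F}_q^\times)^n$, and $\delta(P)=\big((q-1)^n-N(P)\big)/(q-1)^n$. *)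

(* Defs.v *)
From HB Require Import structures.
From mathcomp Require Import all_boot all_order all_algebra.
From mathcomp Require Import boolp Rstruct.

Set Implicit Arguments.
Unset Strict Implicit.
Unset Printing Implicit Defensive.

Import Order.TTheory GRing.Theory Num.Theory.
Local Open Scope ring_scope.

Definition region (n : nat) := 'rV[Rdefinitions.R]_n -> Prop.

Definition conv (n : nat) (S : region n) : region n :=
  fun x => exists (k : nat) (v : 'I_k -> 'rV[Rdefinitions.R]_n) (w : 'I_k -> Rdefinitions.R),
    [/\ forall i, S (v i), forall i, 0 <= w i,
        \sum_i w i = 1 & x = \sum_i w i *: v i].

Definition integral_polytope (n : nat) (P : region n) : Prop :=
  exists (k : nat) (v : 'I_k -> 'rV[int]_n),
    forall x, P x <-> conv (fun y => exists i, y = map_mx (fun z : int => z%:~R) (v i)) x.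

Definition in_box (n : nat) (b : nat) (P : region n) : Prop :=
  forall x, P x -> forall i, 0 <= x 0 i <= b%:R.

Definition join (n m : nat) (P : region n) (Q : region m) : region (n + m + 1) :=
  conv (fun z =>
         (exists p, P p /\ z = row_mx (row_mx p 0) 0)
      \/ (exists y, Q y /\ z = row_mx (row_mx 0 y) (const_mx 1))).

Fixpoint dimk (n k : nat) : nat :=
  match k with 0 => n | k'.+1 => dimk n k' + dimk n k' + 1 end.

Fixpoint Pk (n : nat) (P : region n) (k : nat) : region (dimk n k) :=
  match k return region (dimk n k) with
  | 0 => P
  | k'.+1 => join (@Pk n P k') (@Pk n P k')
  end.
Arguments Pk {n} P k.

(* The k-th standard basis vector e_{k+1} of R^n (0-indexed k). *)
Definition stdvec (n k : nat) : 'rV[Rdefinitions.R]_n := \row_j ((j : nat) == k)%:R.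

Definition uaff (n : nat) (A : 'M[int]_n) (b : 'rV[int]_n) (x : 'rV[Rdefinitions.R]_n) : 'rV[Rdefinitions.R]_n :=
  x *m map_mx (fun z : int => z%:~R) A + map_mx (fun z : int => z%:~R) b.

Definition contains_segment2 (n : nat) (P : region n) : Prop :=
  (0 < n)%N /\ exists (A : 'M[int]_n) (b : 'rV[int]_n), A \in unitmx /\
    forall t : Rdefinitions.R, 0 <= t <= 2 -> P (uaff A b (t *: stdvec n 0)).

Definition contains_square (n : nat) (P : region n) : Prop :=
  (1 < n)%N /\ exists (A : 'M[int]_n) (b : 'rV[int]_n), A \in unitmx /\
    forall s t : Rdefinitions.R, 0 <= s <= 1 -> 0 <= t <= 1 ->
      P (uaff A b (s *: stdvec n 0 + t *: stdvec n 1)).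

Section Code.
Variable F : finFieldType.

Definition qm1 : nat := #|F|.-1.

(* Candidate exponent vectors: points of {0, ..., q-2}^n. *)
Definition expo (n : nat) := {ffun 'I_n -> 'I_qm1}.

Definition latpt (n : nat) (P : region n) (e : expo n) : bool :=
  `[< P (\row_i ((e i : nat)%:R)) >].

Definition monom (n : nat) (e : expo n) (x : {ffun 'I_n -> F}) : F :=
  \prod_i x i ^+ (e i : nat).

Definition evalL (n : nat) (P : region n) (c : {ffun expo n -> F})
    (x : {ffun 'I_n -> F}) : F :=
  \sum_(e | latpt P e) c e * monom e x.

(* f is nonzero as a polynomial: some coefficient on a lattice point is nonzero
   (the monomials x^p are distinct, hence linearly independent). *)
Definition nonzeroL (n : nat) (P : region n) (c : {ffun expo n -> F}) : bool :=
  [exists e, latpt P e && (c e != 0)].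

Definition zeroset (n : nat) (P : region n) (c : {ffun expo n -> F}) :=
  [set x : {ffun 'I_n -> F} | [forall i, x i != 0] && (evalL P c x == 0)].

Definition NP (n : nat) (P : region n) : nat :=
  \max_(c : {ffun expo n -> F} | nonzeroL P c) #|zeroset P c|.

Definition deltaP (n : nat) (P : region n) : rat :=
  (((qm1 ^ n)%:R - (NP P)%:R) / (qm1 ^ n)%:R)%R.

End Code.

(* Main.v *)
Require Import Defs.
From HB Require Import structures.
From mathcomp Require Import all_boot all_order all_algebra.
From mathcomp Require Import boolp Rstruct.
From mathcomp Require Import zify ring lra.
Import Order.TTheory GRing.Theory Num.Theory.
Local Open Scope ring_scope.

Local Notation RR := Rdefinitions.R.

Lemma conv_fin (m : nat) (S : region m) (I : finType) (v : I -> 'rV[RR]_m) (w : I -> RR) :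
  (forall i, S (v i)) -> (forall i, 0 <= w i) -> \sum_i w i = 1 ->
  conv S (\sum_i w i *: v i).
Proof.
move=> Sv w0 w1.
exists #|I|, (fun j => v (enum_val j)), (fun j => w (enum_val j)); split => //.
- by rewrite -w1 -(big_enum_val (A := I)); apply: eq_bigl => i; rewrite inE.
- by rewrite -(big_enum_val (A := I) (fun i => w i *: v i)); apply: eq_bigl => i; rewrite inE.
Qed.

Lemma conv_supp (m : nat) (S : region m) (I : finType) (v : I -> 'rV[RR]_m) (w : I -> RR) :
  (forall i, w i != 0 -> S (v i)) -> (forall i, 0 <= w i) -> \sum_i w i = 1 ->
  conv S (\sum_i w i *: v i).
Proof.
move=> Sv w0 w1.
have [i0 wi0] : exists i0, w i0 != 0.
  case: (pselect (exists i0, w i0 != 0)) => // H; exfalso; move: w1; rewrite big1 => [|i _]; last first.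
    have [//|Hi] := eqVneq (w i) 0; exfalso; apply: H; by exists i.
  by move/eqP; rewrite eq_sym oner_eq0.
have -> : \sum_i w i *: v i = \sum_i w i *: (if w i == 0 then v i0 else v i).
  by apply: eq_bigr => i _; case: eqP => // ->; rewrite !scale0r.
apply: conv_fin => // i; case: ifP => [_|/negbT]; exact: Sv.
Qed.

Lemma conv_conv (m : nat) (S : region m) x : conv (conv S) x -> conv S x.
Proof.
case=> k [v [w [Sv w0 w1 ->]]].
have /choice [f Hf] : forall i : 'I_k, exists t : {kk : nat & (('I_kk -> 'rV[RR]_m) * ('I_kk -> RR))%type},
   [/\ forall j, S ((tagged t).1 j), forall j, 0 <= (tagged t).2 j,
        \sum_j (tagged t).2 j = 1 & v i = \sum_j (tagged t).2 j *: (tagged t).1 j].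
  move=> i; case: (Sv i) => kk [s [u [H1 H2 H3 H4]]].
  by exists (Tagged (fun kk => (('I_kk -> 'rV[RR]_m) * ('I_kk -> RR))%type) (s, u)).
pose J (i : 'I_k) := 'I_(tag (f i)).
have -> : \sum_i w i *: v i =
   \sum_i \sum_(j : J i) (w i * (tagged (f i)).2 j) *: (tagged (f i)).1 j.
  apply: eq_bigr => i _; case: (Hf i) => _ _ _ ->.
  by rewrite scaler_sumr; apply: eq_bigr => j _; rewrite scalerA.
rewrite (sig_big_dep (fun _ => true) (fun _ _ => true)
  (fun i (j : J i) => (w i * (tagged (f i)).2 j) *: (tagged (f i)).1 j)) /=.
apply: conv_fin.
- by move=> p; case: (Hf (tag p)).
- by move=> p; case: (Hf (tag p)) => _ H _ _; rewrite mulr_ge0.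
- rewrite -(sig_big_dep (fun _ => true) (fun _ _ => true)
     (fun i (j : J i) => (w i * (tagged (f i)).2 j))) /= -w1.
  apply: eq_bigr => i _; case: (Hf i) => _ _ H _.
  by rewrite -mulr_sumr H mulr1.
Qed.



Lemma split_lshift m n (k : 'I_m) : split (lshift n k) = inl k.
Proof. exact: (unsplitK (inl k)). Qed.
Lemma split_rshift m n (k : 'I_n) : split (rshift m k) = inr k.
Proof. exact: (unsplitK (inr k)). Qed.

Section Blocks.
Variable n : nat.
Local Notation m := (n + n + 1)%N.
Definition lo (i : 'I_n) : 'I_m := lshift 1 (lshift n i).
Definition mi (i : 'I_n) : 'I_m := lshift 1 (rshift n i).
Definition la : 'I_m := rshift (n + n) ord0.

Variable A : Type.
Definition blk1 (x : {ffun 'I_m -> A}) : {ffun 'I_n -> A} := [ffun i => x (lo i)].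
Definition blk2 (x : {ffun 'I_m -> A}) : {ffun 'I_n -> A} := [ffun i => x (mi i)].
Definition glue (a b : {ffun 'I_n -> A}) (z : A) : {ffun 'I_m -> A} :=
  [ffun i => match split i with
             | inl i' => match split i' with inl k => a k | inr k => b k end
             | inr _ => z end].

Lemma glue_lo a b z k : glue a b z (lo k) = a k.
Proof. by rewrite ffunE /lo !split_lshift. Qed.
Lemma glue_mi a b z k : glue a b z (mi k) = b k.
Proof. by rewrite ffunE /mi split_lshift split_rshift. Qed.
Lemma glue_la a b z : glue a b z la = z.
Proof. by rewrite ffunE /la split_rshift. Qed.
Lemma blk1_glue a b z : blk1 (glue a b z) = a.
Proof. by apply/ffunP => k; rewrite ffunE glue_lo. Qed.
Lemma blk2_glue a b z : blk2 (glue a b z) = b.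
Proof. by apply/ffunP => k; rewrite ffunE glue_mi. Qed.

Lemma ord_cases (P : 'I_m -> Prop) :
  (forall k, P (lo k)) -> (forall k, P (mi k)) -> P la -> forall i, P i.
Proof.
move=> H1 H2 H3 i; rewrite -[i]splitK; case: (split i) => [i'|j] /=.
  rewrite -[i']splitK; case: (split i') => [k|k] /=; [exact: H1|exact: H2].
by rewrite (ord1 j); exact: H3.
Qed.

Lemma glueK x : glue (blk1 x) (blk2 x) (x la) = x.
Proof.
apply/ffunP; apply: ord_cases => [k|k|].
- by rewrite glue_lo ffunE.
- by rewrite glue_mi ffunE.
- by rewrite glue_la.
Qed.
End Blocks.
Arguments lo {n}. Arguments mi {n}. Arguments blk1 {n A}. Arguments blk2 {n A}.
Arguments glue {n A}.

Definition pt (k T : nat) (e : {ffun 'I_k -> 'I_T}) : 'rV[RR]_k := \row_i ((e i : nat)%:R).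
Arguments pt {k T}.

Lemma sum_entry (k : nat) (I : finType) (w : I -> RR) (z : I -> 'rV[RR]_k) i :
  (\sum_j w j *: z j) 0 i = \sum_j w j * z j 0 i.
Proof. by rewrite summxE; apply: eq_bigr => j _; rewrite mxE. Qed.

Lemma conv1 (k : nat) (S : region k) z : S z -> conv S z.
Proof.
move=> Sz; exists 1%N, (fun _ => z), (fun _ => 1); split => //.
- by rewrite big_ord1.
- by rewrite big_ord1 scale1r.
Qed.

Section JoinPts.
Variable n : nat.
Variable P : region n.
Local Notation m := (n + n + 1)%N.

Definition jgen (z : 'rV[RR]_m) :=
  (exists p, P p /\ z = row_mx (row_mx p 0) 0)
   \/ (exists y, P y /\ z = row_mx (row_mx 0 y) (const_mx 1)).

Lemma jgen_cases z : jgen z ->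
  (z 0 (la n) = 0 /\ (forall k, z 0 (mi k) = 0) /\ P (\row_k z 0 (lo k)))
  \/ (z 0 (la n) = 1 /\ (forall k, z 0 (lo k) = 0) /\ P (\row_k z 0 (mi k))).
Proof.
case=> [[p [Pp ->]]|[y [Py ->]]]; [left|right]; rewrite /la /lo /mi.
- rewrite row_mxEr mxE; split => //; split => [k|].
    by rewrite row_mxEl row_mxEr mxE.
  by have -> : \row_k row_mx (row_mx p 0) (0 : 'rV_1) 0 (lshift 1 (lshift n k)) = p
    by apply/rowP => k; rewrite mxE !row_mxEl.
- rewrite row_mxEr mxE; split => //; split => [k|].
    by rewrite !row_mxEl mxE.
  by have -> : \row_k row_mx (row_mx 0 y) (const_mx 1 : 'rV_1) 0 (lshift 1 (rshift n k)) = y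
    by apply/rowP => k; rewrite mxE row_mxEl row_mxEr.
Qed.
End JoinPts.
Arguments jgen {n}. Arguments jgen_cases {n P z}.

Section LatJoin.
Variable F : finFieldType.
Local Notation T := (qm1 F).
Variable HT : (1 < T)%N.
Definition o0 : 'I_T := Ordinal (ltnW HT).
Definition o1 : 'I_T := Ordinal HT.
Variable n : nat.
Local Notation m := (n + n + 1)%N.
Definition ezero : expo F n := [ffun _ => o0].

Lemma pt_blocks (e : {ffun 'I_m -> 'I_T}) :
  pt e = row_mx (row_mx (pt (blk1 e)) (pt (blk2 e))) (const_mx ((e (la n) : nat)%:R)).
Proof.
apply/rowP; apply: ord_cases => [k|k|]; rewrite /pt mxE.
- by rewrite /lo !row_mxEl mxE ffunE.
- by rewrite /mi row_mxEl row_mxEr mxE ffunE.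
- by rewrite /la row_mxEr mxE.
Qed.

Variable P : region n.
Hypothesis Pconv : forall x, conv P x -> P x.

Definition type1 (e : expo F m) := [&& e (la n) == o0, blk2 e == ezero & latpt P (blk1 e)].
Definition type2 (e : expo F m) := [&& e (la n) == o1, blk1 e == ezero & latpt P (blk2 e)].

Lemma pt_ezero : pt ezero = 0.
Proof. by apply/rowP => k; rewrite !mxE ffunE. Qed.

Lemma latpt_join e : latpt (join P P) e = type1 e || type2 e.
Proof.
apply/idP/idP; last first.
  case/orP => /and3P [/eqP hl /eqP h2 /asboolP h1]; apply/asboolP;
    change (conv (jgen P) (pt e)); apply: conv1; rewrite (pt_blocks e) hl h2 pt_ezero.
  - left; exists (pt (blk1 e)); split; first exact: h1.
    by congr row_mx; apply/rowP => k; rewrite !mxE.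
  - right; exists (pt (blk2 e)); split; first exact: h1.
    by congr row_mx; apply/rowP => k; rewrite !mxE.
move/asboolP; change (conv (jgen P) (pt e) -> type1 e || type2 e).
move=> [k [z [w [Hz w0 w1 He]]]].
have coord i : ((e i : nat)%:R : RR) = \sum_j w j * z j 0 i.
  by rewrite -sum_entry -He mxE.
have Hc j := jgen_cases (Hz j).
have Hl j : z j 0 (la n) = 0 \/ z j 0 (la n) = 1.
  by case: (Hc j) => [[-> _]|[-> _]]; [left|right].
have [hl0|hl1] := eqVneq (e (la n) : nat) 0%N.
- have wl j : w j * z j 0 (la n) = 0.
    apply: (@psumr_eq0P _ _ xpredT (fun j => w j * z j 0 (la n))) => //.
      by move=> i _; case: (Hl i) => ->; rewrite ?mulr0 ?mulr1.
    by rewrite -coord hl0.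
  have first j : w j != 0 -> (forall k, z j 0 (mi k) = 0) /\ P (\row_k z j 0 (lo k)).
    move=> wj; case: (Hc j) => [[_ H]|[H1 _]] //.
    by move: (wl j); rewrite H1 mulr1 => /eqP; rewrite (negbTE wj).
  apply/orP; left; apply/and3P; split.
  + by apply/eqP/val_inj.
  + apply/eqP/ffunP => kk; rewrite !ffunE; apply/val_inj => /=.
    apply/eqP; rewrite -(pnatr_eq0 RR) coord big1 // => j _.
    by have [->|/first [->]] := eqVneq (w j) 0; rewrite ?mul0r ?mulr0.
  + apply/asboolP/Pconv; change (conv P (pt (blk1 e))).
    have -> : pt (blk1 e) = \sum_j w j *: \row_kk z j 0 (lo kk).
      apply/rowP => kk; rewrite sum_entry mxE ffunE coord.
      by apply: eq_bigr => j _; rewrite mxE.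
    by apply: conv_supp => // j /first [].
- have le1 : ((e (la n) : nat)%:R : RR) <= 1.
    rewrite coord -w1; apply: ler_sum => j _.
    by case: (Hl j) => ->; rewrite ?mulr0 ?mulr1.
  have hl : (e (la n) : nat) = 1%N.
    by move: le1 hl1; rewrite lern1; case: (nat_of_ord _) => [|[]].
  have wl j : w j * (1 - z j 0 (la n)) = 0.
    apply: (@psumr_eq0P _ _ xpredT (fun j => w j * (1 - z j 0 (la n)))) => //.
      by move=> i _; case: (Hl i) => ->; rewrite ?subr0 ?subrr ?mulr0 ?mulr1.
    rewrite (eq_bigr (fun j => w j - w j * z j 0 (la n))) => [|i _]; last by rewrite mulrBr mulr1.
    by rewrite sumrB w1 -coord hl subrr.
  have second j : w j != 0 -> (forall k, z j 0 (lo k) = 0) /\ P (\row_k z j 0 (mi k)).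
    move=> wj; case: (Hc j) => [[H1 _]|[_ H]] //.
    by move: (wl j); rewrite H1 subr0 mulr1 => /eqP; rewrite (negbTE wj).
  apply/orP; right; apply/and3P; split.
  + by apply/eqP/val_inj.
  + apply/eqP/ffunP => kk; rewrite !ffunE; apply/val_inj => /=.
    apply/eqP; rewrite -(pnatr_eq0 RR) coord big1 // => j _.
    by have [->|/second [->]] := eqVneq (w j) 0; rewrite ?mul0r ?mulr0.
  + apply/asboolP/Pconv; change (conv P (pt (blk2 e))).
    have -> : pt (blk2 e) = \sum_j w j *: \row_kk z j 0 (mi kk).
      apply/rowP => kk; rewrite sum_entry mxE ffunE coord.
      by apply: eq_bigr => j _; rewrite mxE.
    by apply: conv_supp => // j /second [].
Qed.
End LatJoin.
Arguments o0 {F} HT. Arguments o1 {F} HT. Arguments ezero {F} HT n.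
Arguments type1 {F} HT {n} P e. Arguments type2 {F} HT {n} P e.
Arguments latpt_join {F} HT {n P} Pconv e.

Section EvalJoin.
Variable F : finFieldType.
Local Notation T := (qm1 F).
Variable HT : (1 < T)%N.
Variable n : nat.
Local Notation m := (n + n + 1)%N.
Variable P : region n.
Hypothesis Pconv : forall x, conv P x -> P x.
Local Notation o0 := (o0 HT).
Local Notation o1 := (o1 HT).
Local Notation ezero := (ezero HT n).

Definition emb1 (p : expo F n) : expo F m := glue p ezero o0.
Definition emb2 (p : expo F n) : expo F m := glue ezero p o1.
Definition cc1 (c : {ffun expo F m -> F}) : {ffun expo F n -> F} := [ffun p => c (emb1 p)].
Definition cc2 (c : {ffun expo F m -> F}) : {ffun expo F n -> F} := [ffun p => c (emb2 p)].

Lemma monom_split (e : expo F m) (x : {ffun 'I_m -> F}) :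
  monom e x = monom (blk1 e) (blk1 x) * monom (blk2 e) (blk2 x) * x (la n) ^+ e (la n).
Proof.
rewrite /monom big_split_ord big_split_ord big_ord1 /=; congr (_ * _ * _).
- by apply: eq_bigr => i _; rewrite !ffunE.
- by apply: eq_bigr => i _; rewrite !ffunE.
Qed.

Lemma monom_ezero (y : {ffun 'I_n -> F}) : monom ezero y = 1.
Proof. by rewrite /monom big1 // => i _; rewrite ffunE expr0. Qed.

Lemma o0o1 : o0 != o1.
Proof. by []. Qed.

Lemma evalL_join c x :
  evalL (join P P) c x = evalL P (cc1 c) (blk1 x) + x (la n) * evalL P (cc2 c) (blk2 x).
Proof.
rewrite /evalL (eq_bigl (fun e => type1 HT P e || type2 HT P e)); last first.
  by move=> e; rewrite (latpt_join HT Pconv).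
rewrite (bigID (type1 HT P)) /=; congr (_ + _).
- rewrite (eq_bigl (type1 HT P)); last first.
    by move=> e; apply: andb_idl => ->.
  rewrite (reindex_onto emb1 blk1); last first.
    move=> e /and3P [/eqP hl /eqP h2 _].
    by rewrite /emb1 -hl -h2 glueK.
  apply: eq_big => p.
    by rewrite /type1 /emb1 glue_la blk2_glue blk1_glue !eqxx andbT.
  move=> _; rewrite ffunE monom_split /emb1 blk1_glue blk2_glue glue_la monom_ezero.
  by rewrite expr0 !mulr1.
- rewrite (eq_bigl (type2 HT P)); last first.
    move=> e; rewrite /type1 /type2; have [->|ne] := eqVneq (e (la n)) o1.
      by rewrite eq_sym (negbTE o0o1) /= andbT.
    by rewrite /= orbF andbN.
  rewrite mulr_sumr (reindex_onto emb2 blk2); last first.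
    move=> e /and3P [/eqP hl /eqP h2 _].
    by rewrite /emb2 -hl -h2 glueK.
  apply: eq_big => p.
    by rewrite /type2 /emb2 glue_la blk2_glue blk1_glue !eqxx andbT.
  move=> _; rewrite ffunE monom_split /emb2 blk1_glue blk2_glue glue_la monom_ezero.
  by rewrite mul1r (_ : (o1 : nat) = 1%N) // expr1 mulrA mulrC.
Qed.

Lemma nonzeroL_join c :
  nonzeroL (join P P) c = nonzeroL P (cc1 c) || nonzeroL P (cc2 c).
Proof.
apply/existsP/orP.
- case=> e /andP []; rewrite (latpt_join HT Pconv) => /orP [] /and3P [/eqP hl /eqP h2 lp] ce.
  + left; apply/existsP; exists (blk1 e); rewrite lp ffunE /emb1 -hl -h2 glueK //.
  + right; apply/existsP; exists (blk2 e); rewrite lp ffunE /emb2 -hl -h2 glueK //.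
- case=> /existsP [p /andP [lp cp]]; move: cp; rewrite ffunE => cp.
  + exists (emb1 p); rewrite cp andbT (latpt_join HT Pconv); apply/orP; left.
    by rewrite /type1 /emb1 glue_la blk2_glue blk1_glue !eqxx.
  + exists (emb2 p); rewrite cp andbT (latpt_join HT Pconv); apply/orP; right.
    by rewrite /type2 /emb2 glue_la blk2_glue blk1_glue !eqxx.
Qed.
End EvalJoin.
Arguments cc1 {F} HT {n}. Arguments cc2 {F} HT {n}. Arguments emb1 {F} HT {n}. Arguments emb2 {F} HT {n}.
Arguments evalL_join {F} HT {n P} Pconv. Arguments nonzeroL_join {F} HT {n P} Pconv.
Arguments o0o1 {F} HT.


Lemma card_sumb (I : finType) (A : {set I}) : #|A| = (\sum_x (x \in A : nat))%N.
Proof. by rewrite -sum1_card big_mkcond /=; apply: eq_bigr => x _; case: ifP. Qed.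

Section Count.
Variable F : finFieldType.
Local Notation T := (qm1 F).

Definition tor k := [set x : {ffun 'I_k -> F} | [forall i, x i != 0]].

Lemma card_tor k : #|tor k| = (T ^ k)%N.
Proof.
have -> : #|tor k| = #|[set f : {ffun 'I_k -> F} | f \in ffun_on (predC1 (0 : F))]|.
  by apply: eq_card => x; rewrite !inE; apply/forallP/ffun_onP => H i; have := H i; rewrite ?inE.
by rewrite cardsE card_ffun_on cardC1 card_ord.
Qed.

Variable n : nat.
Local Notation m := (n + n + 1)%N.

Definition K (u v : F) := #|[set z : F | (z != 0) && (u + z * v == 0)]|.

Lemma tor_glue (a b : {ffun 'I_n -> F}) z :
  [forall i, glue a b z i != 0] = [&& [forall i, a i != 0], [forall i, b i != 0] & z != 0].
Proof.
apply/forallP/and3P => [H|[/forallP Ha /forallP Hb Hz]].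
- split; [apply/forallP => i; have := H (lo i); by rewrite glue_lo
        |apply/forallP => i; have := H (mi i); by rewrite glue_mi
        |have := H (la n); by rewrite glue_la].
- apply: ord_cases => [k|k|]; by rewrite ?glue_lo ?glue_mi ?glue_la.
Qed.

Lemma count_join (g h : {ffun 'I_n -> F} -> F) :
  #|[set x : {ffun 'I_m -> F} | [forall i, x i != 0] && (g (blk1 x) + x (la n) * h (blk2 x) == 0)]|
  = (\sum_(a in tor n) \sum_(b in tor n) K (g a) (h b))%N.
Proof.
rewrite card_sumb.
rewrite (reindex (fun u : ({ffun 'I_n -> F} * {ffun 'I_n -> F}) * F => glue u.1.1 u.1.2 u.2)) /=; last first.
  exists (fun x => ((blk1 x, blk2 x), x (la n))) => [[[a b] z] _|x _] /=.
    by rewrite blk1_glue blk2_glue glue_la.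
  exact: glueK.
set S := [set x : {ffun 'I_m -> F} | _].
transitivity (\sum_(a : {ffun 'I_n -> F}) \sum_(b : {ffun 'I_n -> F}) \sum_(z : F)
   (glue a b z \in S : nat))%N.
  by rewrite pair_big /= pair_big /=; apply: eq_big => // [[[a b] z]].
rewrite [RHS]big_mkcond; apply: eq_bigr => a _ /=.
have ta_def : (a \in tor n) = [forall i, a i != 0] by rewrite inE.
case: ifP => ta; last first.
  by rewrite big1 // => b _; rewrite big1 // => z _; rewrite !inE tor_glue -ta_def ta.
rewrite [RHS]big_mkcond; apply: eq_bigr => b _ /=.
have tb_def : (b \in tor n) = [forall i, b i != 0] by rewrite inE.
case: ifP => tb; last first.
  by rewrite big1 // => z _; rewrite !inE tor_glue -ta_def -tb_def ta tb.
rewrite /K card_sumb; apply: eq_bigr => z _.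
by rewrite !inE tor_glue -ta_def -tb_def ta tb blk1_glue blk2_glue glue_la.
Qed.
End Count.
Arguments K {F}.

Section Count2.
Variable F : finFieldType.
Local Notation T := (qm1 F).
Variable n : nat.

Lemma K_0 (u : F) : K u 0 = ((u == 0)%R * T)%N.
Proof.
rewrite /K; have [->|nu] := eqVneq u 0.
  rewrite mul1n /qm1 -(cardC1 (0 : F)) cardsE; apply: eq_card => z; rewrite !inE.
  by rewrite unfold_in /= mulr0 addr0 eqxx andbT.
rewrite /= mul0n; apply/eqP; rewrite cards_eq0; apply/eqP/setP => z.
by rewrite !inE mulr0 addr0 (negbTE nu) andbF.
Qed.

Lemma K_bound (u v : F) : (K u v <= (u == 0)%R * (v == 0)%R * T + (u != 0)%R * (v != 0)%R)%N.
Proof.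
have [->|nv] := eqVneq v 0.
  by rewrite K_0 /= !(mul0n, muln0, mul1n, muln1, addn0, add0n).
have [->|nu] := eqVneq u 0.
  rewrite /= !(mul0n, muln0, mul1n, muln1, addn0, add0n).
  rewrite /K leqn0 cards_eq0; apply/eqP/setP => z; rewrite !inE add0r mulf_eq0.
  by rewrite (negbTE nv) orbF andNb.
rewrite /= !(mul0n, muln0, mul1n, muln1, addn0, add0n).
rewrite /K (leq_trans (subset_leq_card (_ : _ \subset [set - u / v]))) ?cards1 //.
apply/subsetP => z; rewrite !inE => /andP [_ /eqP H]; apply/eqP.
by apply: (mulIf nv); rewrite divfK //; apply/eqP; rewrite -addr_eq0 addrC H.
Qed.

Definition Az (g : {ffun 'I_n -> F} -> F) := (\sum_(a in tor F n) ((g a == 0)%R : nat))%N.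
Definition Anz (g : {ffun 'I_n -> F} -> F) := (\sum_(a in tor F n) ((g a != 0)%R : nat))%N.

Lemma Az_Anz g : (Az g + Anz g = T ^ n)%N.
Proof.
rewrite /Az /Anz -big_split /= -card_tor -sum1_card; apply: eq_bigr => a _.
by case: (g a == 0).
Qed.

Lemma count_upper g h :
  (\sum_(a in tor F n) \sum_(b in tor F n) K (g a) (h b)
    <= T * Az g * Az h + Anz g * Anz h)%N.
Proof.
apply: (@leq_trans (\sum_(a in tor F n) \sum_(b in tor F n)
     ((g a == 0)%R * (h b == 0)%R * T + (g a != 0)%R * (h b != 0)%R))%N).
  by apply: leq_sum => a _; apply: leq_sum => b _; apply: K_bound.
have E (f1 f2 : {ffun 'I_n -> F} -> nat) : ((\sum_(a in tor F n) f1 a) * (\sum_(b in tor F n) f2 b)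
   = \sum_(a in tor F n) \sum_(b in tor F n) f1 a * f2 b)%N.
  by rewrite big_distrl /=; apply: eq_bigr => a _; rewrite big_distrr.
rewrite /Az /Anz -mulnA !E big_distrr -big_split /=.
apply: leq_sum => a _; rewrite big_distrr -big_split /=.
by apply: leq_sum => b _; rewrite mulnC.
Qed.

Lemma count_h0 g :
  (\sum_(a in tor F n) \sum_(b in tor F n) K (g a) 0%R = T * Az g * T ^ n)%N.
Proof.
rewrite /Az -card_tor big_distrr big_distrl /=; apply: eq_bigr => a _.
rewrite -sum1_card big_distrr /=; apply: eq_bigr => b _.
by rewrite K_0 muln1 mulnC.
Qed.
End Count2.
Arguments Az {F n}. Arguments Anz {F n}.


Local Close Scope ring_scope.
Lemma arith (T N D A A' B B' : nat) : A + A' = D -> B + B' = D -> D <= T*N ->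
  (A <= N \/ A' = 0) -> (B <= N \/ B' = 0) -> (A <= N \/ B <= N) ->
  T*A*B + A'*B' <= T*N*D.
Proof.
move=> hA hB hD ha hb hc.
have key : forall X Y X' Y', X + X' = D -> Y + Y' = D -> X <= N -> (Y <= N \/ Y' = 0) ->
   T*X*Y + X'*Y' <= T*N*D.
  move=> X Y X' Y' hX hY hx [hy|hy].
    have h1 : X'*Y' <= X'*(T*N) by apply: leq_mul => //; lia.
    have h3 : T*X*Y <= T*X*N by apply: leq_mul.
    have h4 : T*X*N + X'*(T*N) = T*N*D by rewrite -hX; lia.
    lia.
  rewrite hy muln0 addn0 -hY hy addn0.
  have h3 : T*X*Y <= T*N*Y by apply: leq_mul => //; apply: leq_mul.
  lia.
case: hc => hc.
  exact: key.
rewrite [T*A*B]mulnAC [A'*B']mulnC; exact: key.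
Qed.

Local Open Scope ring_scope.
Section Gen.
Variable F : finFieldType.
Local Notation T := (qm1 F).
Variable n : nat.
Variable P : region n.

Lemma zeroset_Az (c : {ffun expo F n -> F}) : #|zeroset P c| = Az (fun a => evalL P c a).
Proof.
rewrite -sum1_card /Az !big_mkcond /=.
rewrite [RHS]big_mkcond /=; apply: eq_bigr => a _.
by rewrite !inE; case: ([forall i, a i != 0]) => //=; case: (_ == 0).
Qed.

Lemma evalL_zero (c : {ffun expo F n -> F}) : ~~ nonzeroL P c -> forall x, evalL P c x = 0.
Proof.
move=> nz x; rewrite /evalL big1 // => e le.
have : ~~ (latpt P e && (c e != 0)) by apply: contra nz => H; apply/existsP; exists e.
by rewrite le /= negbK => /eqP ->; rewrite mul0r.
Qed.

Lemma NP_le : (NP F P <= T ^ n)%N.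
Proof.
apply/bigmax_leqP => c _; rewrite -card_tor; apply: subset_leq_card.
by apply/subsetP => x; rewrite !inE => /andP [].
Qed.

Lemma zs_le (c : {ffun expo F n -> F}) : nonzeroL P c -> (#|zeroset P c| <= NP F P)%N.
Proof. by move=> nz; exact: (@leq_bigmax_cond _ (nonzeroL P) (fun c => #|zeroset P c|) c nz). Qed.

Lemma NP_attained : (0 < NP F P)%N -> exists2 c : {ffun expo F n -> F}, nonzeroL P c & #|zeroset P c| = NP F P.
Proof.
case: (pickP (fun c : {ffun expo F n -> F} => nonzeroL P c)) => [c0 Hc0|none] Npos.
  have pos : (0 < #|[pred c : {ffun expo F n -> F} | nonzeroL P c]|)%N.
    by apply/card_gt0P; exists c0.
  have [c Hc Hm] := @eq_bigmax_cond _ _ (fun c => #|zeroset P c|) pos.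
  by exists c; [rewrite inE in Hc | rewrite /NP -Hm].
by move: Npos; rewrite /NP big_pred0.
Qed.
End Gen.
Arguments zs_le {F n P c}. Arguments NP_attained {F n P}. Arguments zeroset_Az {F n P}.
Arguments evalL_zero {F n P c}. Arguments NP_le {F n P}.

Section NPJoin.
Variable F : finFieldType.
Local Notation T := (qm1 F).
Variable HT : (1 < T)%N.
Variable n : nat.
Variable P : region n.
Hypothesis Pconv : forall x, conv P x -> P x.

Lemma NP_join : (T ^ n <= T * NP F P)%N -> NP F (join P P) = (T * NP F P * T ^ n)%N.
Proof.
move=> H.
apply/eqP; rewrite eqn_leq; apply/andP; split.
- apply/bigmax_leqP => c nzc.
  pose g := fun a => evalL P (cc1 HT c) a.
  pose h := fun a => evalL P (cc2 HT c) a.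
  have -> : #|zeroset (join P P) c| =
     #|[set x : {ffun 'I_(n + n + 1) -> F} | [forall i, x i != 0] && (g (blk1 x) + x (la n) * h (blk2 x) == 0)]|.
    by apply: eq_card => x; rewrite !inE (evalL_join HT Pconv).
  rewrite count_join; apply: leq_trans (count_upper _ _ g h) _.
  have Hg : (Az g <= NP F P)%N \/ Anz g = 0%N.
    case: (boolP (nonzeroL P (cc1 HT c))) => nz; [left; rewrite -zeroset_Az; exact: zs_le | right].
    by rewrite /Anz big1 // => a _; rewrite /g (evalL_zero nz) eqxx.
  have Hh : (Az h <= NP F P)%N \/ Anz h = 0%N.
    case: (boolP (nonzeroL P (cc2 HT c))) => nz; [left; rewrite -zeroset_Az; exact: zs_le | right].
    by rewrite /Anz big1 // => a _; rewrite /h (evalL_zero nz) eqxx.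
  have Hc : (Az g <= NP F P)%N \/ (Az h <= NP F P)%N.
    move: nzc; rewrite (nonzeroL_join HT Pconv) => /orP [nz|nz]; [left|right];
      rewrite -zeroset_Az; exact: zs_le.
  exact: arith (Az_Anz _ _ g) (Az_Anz _ _ h) H Hg Hh Hc.
- have Npos : (0 < NP F P)%N.
    have : (0 < T ^ n)%N by rewrite expn_gt0 (ltnW HT).
    by move=> /leq_trans /(_ H); rewrite muln_gt0 => /andP [].
  have [c1 nz1 e1] := NP_attained Npos.
  pose c : {ffun expo F (n + n + 1) -> F} :=
    [ffun e : expo F (n + n + 1) => if (e (la n) == o0 HT) && (blk2 e == ezero HT n) then c1 (blk1 e) else 0].
  have cc1c : cc1 HT c = c1.
    by apply/ffunP => p; rewrite ffunE /c ffunE /emb1 glue_la blk2_glue blk1_glue !eqxx.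
  have cc2c : forall x, evalL P (cc2 HT c) x = 0.
    move=> x; rewrite /evalL big1 // => p _.
    by rewrite ffunE /c ffunE /emb2 glue_la eq_sym (negbTE (o0o1 HT)) mul0r.
  have nzc : nonzeroL (join P P) c by rewrite (nonzeroL_join HT Pconv) cc1c nz1.
  apply: leq_trans (zs_le nzc).
  pose g := fun a => evalL P c1 a.
  have -> : #|zeroset (join P P) c| =
      (\sum_(a in tor F n) \sum_(b in tor F n) K (g a) 0%R)%N.
    rewrite -(count_join _ _ g (fun _ => 0)); apply: eq_card => x.
    by rewrite !inE (evalL_join HT Pconv) cc2c cc1c.
  by rewrite count_h0 -e1 zeroset_Az.
Qed.
End NPJoin.


Local Notation imap w := (map_mx (fun z : int => (z%:~R : RR)) w).

Section Base.
Variable F : finFieldType.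
Local Notation T := (qm1 F).
Variable HT : (1 < T)%N.
Variable n : nat.
Variable P : region n.
Hypothesis Hbox : in_box (#|F| - 2) P.

Lemma box_int (w : 'rV[int]_n) : P (imap w) -> forall i, 0 <= w 0 i /\ (absz (w 0 i)%R < T)%N.
Proof.
move=> Pw i; have := Hbox _ Pw i; rewrite mxE ler0z => /andP [h0 h1]; split => //.
move: h1; rewrite [(_ - 2)%:R]pmulrn ler_int -(gez0_abs h0) lez_nat /qm1 => h.
by apply: (leq_ltn_trans h); move: HT; rewrite /qm1; lia.
Qed.

Definition toexp (w : 'rV[int]_n) : expo F n := [ffun i => insubd (o0 HT) (absz (w 0 i)%R)].

Lemma toexpE w : P (imap w) -> forall i, (toexp w i : nat) = absz (w 0 i).
Proof.
by move=> Pw i; rewrite ffunE val_insubd; case: (box_int _ Pw i) => _ ->.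
Qed.

Lemma latpt_toexp w : P (imap w) -> latpt P (toexp w).
Proof.
move=> Pw; apply/asboolP; have -> : \row_i ((toexp w i : nat)%:R) = imap w => //.
apply/rowP => i; rewrite !mxE toexpE // natr_absz.
rewrite ger0_norm //.
by case: (box_int _ Pw i).
Qed.

Lemma monom_pow w (c : F) (u : 'I_n -> int) : c != 0 -> P (imap w) ->
  monom (toexp w) [ffun i => c ^ u i] = c ^ (\sum_i u i * w 0 i).
Proof.
move=> cnz Pw; rewrite /monom.
rewrite (big_morph (fun z => c ^ z) (fun x y => expfzDr x y cnz) (expr0z c)).
apply: eq_bigr => i _; rewrite ffunE toexpE // exprnP exprz_exp abszE.
by rewrite ger0_norm //; case: (box_int _ Pw i).
Qed.

Variables w0 w1 : 'rV[int]_n.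
Variable u : 'I_n -> int.
Hypothesis P0 : P (imap w0).
Hypothesis P1 : P (imap w1).
Hypothesis Hu : \sum_i (w1 0 i - w0 0 i) * u i = 1.
Local Notation e0 := (toexp w0).
Local Notation e1 := (toexp w1).

Lemma monom_mul (e : expo F n) (x y : {ffun 'I_n -> F}) :
  monom e [ffun i => x i * y i] = monom e x * monom e y.
Proof. by rewrite /monom -big_split; apply: eq_bigr => i _; rewrite ffunE exprMn. Qed.

Lemma monom_neq0 (e : expo F n) (x : {ffun 'I_n -> F}) : [forall i, x i != 0] -> monom e x != 0.
Proof. by move/forallP => H; apply/prodf_neq0 => i _; rewrite expf_neq0. Qed.

Lemma witness (c : F) : c != 0 ->
  exists y : {ffun 'I_n -> F}, [forall i, y i != 0] && (monom e1 y == c * monom e0 y).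
Proof.
move=> cnz; exists [ffun i => c ^ u i]; apply/andP; split.
  by apply/forallP => i; rewrite ffunE expfz_neq0.
rewrite !monom_pow //.
have -> : \sum_i u i * w1 0 i = 1 + \sum_i u i * w0 0 i.
  by rewrite -Hu -big_split; apply: eq_bigr => i _ /=; ring.
by rewrite expfzDr // expr1z.
Qed.

Definition fib (c : F) := [set x : {ffun 'I_n -> F} | [forall i, x i != 0] && (monom e1 x == c * monom e0 x)].

Lemma fib_le c : c != 0 -> (#|fib c| <= #|fib 1%R|)%N.
Proof.
move=> cnz; have [y /andP [/forallP ty /eqP hy]] := witness (c^-1) (invr_neq0 cnz).
pose f := fun x : {ffun 'I_n -> F} => [ffun i => x i * y i].
have finj : injective f.
  move=> x1 x2 /ffunP H; apply/ffunP => i; have := H i; rewrite !ffunE.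
  exact: (mulIf (ty i)).
rewrite -(card_imset _ finj); apply: subset_leq_card; apply/subsetP => z /imsetP [x xin ->].
rewrite !inE in xin *; case/andP: xin => /forallP tx /eqP hx; apply/andP; split.
  by apply/forallP => i; rewrite ffunE mulf_neq0.
rewrite !monom_mul hx hy mul1r mulrACA mulfV // mul1r.
by [].
Qed.

Lemma tor_sum : (T ^ n <= T * #|fib 1%R|)%N.
Proof.
rewrite -(card_tor F n) card_sumb.
have -> : (\sum_x (x \in tor F n : nat) = \sum_(c : F | c != 0%R) #|fib c|)%N.
  rewrite (eq_bigr (fun c => \sum_x (x \in fib c : nat))%N) => [|c _]; last by rewrite card_sumb.
  rewrite exchange_big /=; apply: eq_bigr => x _.
  rewrite inE; case: (boolP [forall i, x i != 0]) => tx; last first.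
    by rewrite big1 // => c _; rewrite inE (negbTE tx).
  have m0nz := monom_neq0 e0 _ tx; have m1nz := monom_neq0 e1 _ tx.
  rewrite (eq_bigr (fun c : F => if (monom e1 x == c * monom e0 x)%R then 1%N else 0%N)); last first.
    by move=> c _; rewrite inE tx /=; case: eqP.
  rewrite -big_mkcondr (eq_bigl (pred1 (monom e1 x / monom e0 x))) ?big_pred1_eq // => c /=.
  apply/andP/eqP => [[_ /eqP ->]|->]; first by rewrite mulfK.
  by split; [rewrite mulf_neq0 ?invr_neq0 | rewrite divfK].
apply: (@leq_trans (\sum_(c : F | c != 0%R) #|fib 1%R|)%N).
  by apply: leq_sum => c; exact: fib_le.
rewrite /qm1 -(cardC1 (0 : F)) -sum_nat_const.
by rewrite (eq_bigl (predC1 0)).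
Qed.

Lemma e10 : e1 != e0.
Proof.
apply/eqP => /ffunP H; move: Hu; rewrite big1 => [|i _]; first by move/eqP; rewrite eq_sym oner_eq0.
have := H i; rewrite !ffunE => /(congr1 val); rewrite !val_insubd.
case: (box_int _ P0 i) => h0 ->; case: (box_int _ P1 i) => h1 -> /(congr1 Posz).
by rewrite !abszE !ger0_norm // => ->; rewrite subrr mul0r.
Qed.

Definition cf : {ffun expo F n -> F} := [ffun e => (e == e1)%:R - (e == e0)%:R].

Lemma sum_ind (e' : expo F n) (x : {ffun 'I_n -> F}) : latpt P e' ->
  \sum_(e | latpt P e) (e == e')%:R * monom e x = monom e' x.
Proof.
move=> le; rewrite (bigD1 e') //= eqxx mul1r big1 ?addr0 // => e /andP [_ ne].
by rewrite (negbTE ne) mul0r.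
Qed.

Lemma evalL_cf x : evalL P cf x = monom e1 x - monom e0 x.
Proof.
rewrite /evalL (eq_bigr (fun e => (e == e1)%:R * monom e x - (e == e0)%:R * monom e x)).
  by rewrite sumrB !sum_ind //; apply: latpt_toexp.
by move=> e _; rewrite ffunE mulrBl.
Qed.

Lemma base_bound : (T ^ n <= T * NP F P)%N.
Proof.
apply: (leq_trans tor_sum); rewrite leq_mul2l; apply/orP; right.
have nz : nonzeroL P cf.
  apply/existsP; exists e1; rewrite latpt_toexp //= ffunE eqxx eq_sym (negbTE e10) subr0.
  by rewrite /= mulr1n eq_sym oner_neq0.
apply: leq_trans (zs_le nz); apply: subset_leq_card; apply/subsetP => x.
rewrite !inE => /andP [-> /eqP h] /=; by rewrite evalL_cf h mul1r subrr.
Qed.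
End Base.

Section Pts.
Variable n : nat.
Variable P : region n.

Lemma uaff_std (A : 'M[int]_n) (b : 'rV[int]_n) (i0 : 'I_n) :
  uaff A b (stdvec n i0) = imap (row i0 A + b).
Proof.
apply/rowP => j; rewrite /uaff !mxE (bigD1 i0) //= big1 => [|k ne]; last first.
  rewrite !mxE; have -> : ((k : nat) == i0) = false by apply/negbTE.
  by rewrite mul0r.
by rewrite !mxE eqxx mul1r addr0 intrD.
Qed.

Lemma uaff_0 (A : 'M[int]_n) (b : 'rV[int]_n) : uaff A b 0 = imap b.
Proof. by rewrite /uaff mul0mx add0r. Qed.

Lemma inv_sum (A : 'M[int]_n) (b : 'rV[int]_n) (i0 : 'I_n) : A \in unitmx ->
  \sum_i ((row i0 A + b) 0 i - b 0 i) * invmx A i i0 = 1.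
Proof.
move=> uA; have := mulmxV uA; move/matrixP => /(_ i0 i0); rewrite !mxE eqxx /= mulr1n => <-.
by apply: eq_bigr => i _; rewrite !mxE addrK.
Qed.

Lemma two_pts : contains_segment2 P \/ contains_square P ->
  exists w0 w1 : 'rV[int]_n, exists u : 'I_n -> int,
    [/\ P (imap w0), P (imap w1) & \sum_i (w1 0 i - w0 0 i) * u i = 1].
Proof.
case=> [[n0 [A [b [uA H]]]]|[n1 [A [b [uA H]]]]].
- pose i0 : 'I_n := Ordinal n0.
  exists b, (row i0 A + b), (fun i => invmx A i i0); split; last exact: inv_sum.
  + have := H 0; rewrite scale0r uaff_0; apply; apply/andP; split; lra.
  + have := H 1; rewrite scale1r (_ : stdvec n 0 = stdvec n i0) // uaff_std; apply;
      apply/andP; split; lra.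
- pose i0 : 'I_n := Ordinal (ltnW n1).
  exists b, (row i0 A + b), (fun i => invmx A i i0); split; last exact: inv_sum.
  + have := H 0 0; rewrite !scale0r addr0 uaff_0; apply; apply/andP; split; lra.
  + have := H 1 0; rewrite scale0r scale1r addr0 (_ : stdvec n 0 = stdvec n i0) // uaff_std; apply;
      apply/andP; split; lra.
Qed.
End Pts.


Lemma ineq (D N T : nat) : (0 < D)%N -> (0 < T)%N -> (N <= D)%N -> (D <= T * N)%N ->
  Num.min (((D%:R - N%:R) / D%:R : rat))
   (2 * ((D%:R - N%:R) / D%:R) - ((D%:R - N%:R) / D%:R) ^+ 2 * ((T.+1)%:R / T%:R))
  = (D%:R - N%:R) / D%:R.
Proof.
move=> D0 T0 ND DTN.
set x : rat := (_ / _).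
have hd : (0 : rat) < D%:R by rewrite ltr0n.
have ht : (0 : rat) < T%:R by rewrite ltr0n.
have hn : (N%:R : rat) <= D%:R by rewrite ler_nat.
have hn0 : (0 : rat) <= N%:R by rewrite ler0n.
have hdtn : (D%:R : rat) <= T%:R * N%:R by rewrite -natrM ler_nat.
have x0 : 0 <= x by rewrite divr_ge0 // subr_ge0.
have xy : x * ((T.+1)%:R / T%:R) <= 1.
  have -> : x * ((T.+1)%:R / T%:R) = ((D%:R - N%:R) * (T%:R + 1)) / (D%:R * T%:R).
    rewrite /x -addn1 natrD; field.
    by apply/andP; split; rewrite lt0r_neq0.
  rewrite ler_pdivrMr ?mulr_gt0 //; nra.
apply: min_l; nra.
Qed.

Lemma conv_mono (m : nat) (S S' : region m) x : (forall y, S y -> S' y) -> conv S x -> conv S' x.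
Proof.
move=> H [k [v [w [Hv w0 w1 ->]]]]; exists k, v, w; split => // i; exact: H.
Qed.

Lemma delta_step (F : finFieldType) (d N : nat) : (0 < qm1 F)%N ->
  (((qm1 F) ^ (d + d + 1))%:R - (qm1 F * N * qm1 F ^ d)%:R) / ((qm1 F) ^ (d + d + 1))%:R
  = (((qm1 F) ^ d)%:R - N%:R) / ((qm1 F) ^ d)%:R :> rat.
Proof.
move=> T0; rewrite expnD expn1 expnD !natrM.
have h1 : ((qm1 F)%:R : rat) != 0 by rewrite pnatr_eq0 -lt0n.
have h2 : ((qm1 F ^ d)%:R : rat) != 0 by rewrite pnatr_eq0 -lt0n expn_gt0 T0.
field; by rewrite h1 h2.
Qed.

Theorem mainTheorem10 (F : finFieldType) (n : nat) (P : region n) :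
  (3 <= #|F|)%N ->
  integral_polytope P ->
  in_box (#|F| - 2) P ->
  contains_segment2 P \/ contains_square P ->
  (forall k : nat,
     deltaP F (Pk P k.+1) =
     Num.min (deltaP F (Pk P k))
       (2 * deltaP F (Pk P k)
        - deltaP F (Pk P k) ^+ 2 * ((#|F|%:R : rat) / (#|F|.-1)%:R))) /\
  (forall k : nat, (2 <= k)%N -> deltaP F (Pk P k) = deltaP F (Pk P 2)).
Proof.
move=> q3 [kV [V HP]] Hbox Hseg.
have HT : (1 < qm1 F)%N by rewrite /qm1; lia.
have T0 : (0 < qm1 F)%N by apply: ltnW.
have P0conv : forall x, conv P x -> P x.
  move=> x Cx; apply/HP; apply: conv_conv; by apply: conv_mono Cx => y /HP.
have conv_k : forall k x, conv (Pk P k) x -> Pk P k x.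
  move=> [|k] z Cz; [exact: P0conv Cz | exact: conv_conv Cz].
have [w0 [w1 [u [P0 P1 Hu]]]] := @two_pts n P Hseg.
have base := @base_bound F HT n P Hbox w0 w1 u P0 P1 Hu.
have bound : forall k, (qm1 F ^ (dimk n k) <= qm1 F * NP F (Pk P k))%N.
  elim => [|k IH] //=.
  rewrite (@NP_join F HT _ _ (conv_k k) IH) expnD expn1 expnD.
  move: IH; set D := (qm1 F ^ dimk n k)%N; set N := NP F (Pk P k); set T := qm1 F => IH.
  have := leq_mul (leq_mul IH (leqnn D)) (leqnn T).
  move/leq_trans; apply; rewrite -!mulnA leq_mul2l; apply/orP; right.
  by rewrite [(T * _)%N]mulnC -mulnA.
have Nk k : NP F (Pk P k.+1) = (qm1 F * NP F (Pk P k) * qm1 F ^ (dimk n k))%N.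
  exact: (@NP_join F HT _ _ (conv_k k) (bound k)).
have dk k : deltaP F (Pk P k.+1) = deltaP F (Pk P k).
  by rewrite /deltaP Nk /= delta_step.
have d0 k : deltaP F (Pk P k) = deltaP F P.
  by elim: k => [|k IH] //; rewrite dk.
split.
- move=> k; rewrite dk /deltaP.
  have -> : #|F| = (qm1 F).+1 by rewrite /qm1 prednK //; lia.
  rewrite -/(qm1 F).
  rewrite /=; symmetry; apply: ineq; [by rewrite expn_gt0 T0 | by [] | exact: NP_le | exact: bound].
- by move=> k _; rewrite !d0.
Qed.
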